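(* In the multi-period single-sector model described in the context, for $n+m \le N_{t_k}$, \begin{displaymath} \mathbb{P}\left(D_{t_{k+1}} - D_{t_k} = n \mid I_{t_{k}} = m; N_{t_k}\right) = \tilde{P}\left(n; N_{t_k} - m, \eta_S + m \eta_{FS}, \eta_{FS}, \eta_{F}\right), \end{displaymath} where $\tilde{P}(n;N,\eta_S,\eta_{FS},\eta_F) := \mathbb{P}\left(\sum_{i=1}^N X_i=n\right) = \frac{1}{Z_1}\binom{N}{n}\left[e^{n\eta_F} + e^{\eta_S + n\eta_F + n\eta_{FS}}\right]$ is the loss distribution of the one-period single-sector model with $N$ firms and parameters $(\eta_S,\eta_{FS},\eta_F)$, and $Z_{N,\eta_S,\eta_{FS},\eta_F}:=Z_1 = (1+e^{\eta_F})^N + e^{\eta_S}(1+e^{\eta_F+\eta_{FS}})^N$ is its normalization constant.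
   Context: One-period single-sector model: for $N$ firms with default indicators $X_1,\dots,X_N\in\{0,1\}$ and real parameters $\eta_S,\eta_{FS},\eta_F$ (obtained by summing out one binary sector node connected to all firms in an Ising-type graphical model), $\mathbb{P}(X_1=x_1,\dots,X_N=x_N) = \frac{1}{Z_1}\left(e^{\eta_F\sum_i x_i} + e^{\eta_S + (\eta_{FS}+\eta_F)\sum_i x_i}\right)$ with $Z_1=(1+e^{\eta_F})^N + e^{\eta_S}(1+e^{\eta_F+\eta_{FS}})^N$. Multi-period construction: start with a single-sector graph with $N$ firms at payment dates $t_0=0<t_1<\dots$. Let $D_{t_k}$ be the number of firms defaulted up to $t_k$ and $N_{t_k}$ the number of firms remaining in the system, with $D_0=0$, $N_0=N$. At the beginning of each period each defaulted node still in the system is removed independently with probability $p_R$. The number of firms currently in default and still in the system is $I_{t_k} = D_{t_k} + N_{t_k} - N$. The number of additional defaults in $(t_k,t_{k+1})$ is defined by conditioning the one-period single-sector distribution on $N_{t_k}$ firms, with the $m$ in-default firms labelled $1,\dots,m$: $\mathbb{P}(D_{t_{k+1}} - D_{t_k} = n \mid I_{t_k} = m; N_{t_k}) := \sum_{i_1,\dots,i_n \in \{m+1,\dots,N_{t_k}\}} \mathbb{P}(X_{i_1}=\dots=X_{i_n}=1, X_{i_{n+1}}=\dots=X_{i_{N_{t_k}}}=0 \mid X_1=\dots=X_m=1)$, for $n+m\le N_{t_k}$ (the sum running over choices of the $n$ newly defaulting firms among the $N_{t_k}-m$ non-defaulted ones, the remaining ones surviving). *)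

(* Defs.v *)
From HB Require Import structures.
From mathcomp Require Import all_boot all_order all_algebra.
From mathcomp Require Import reals.
From mathcomp Require Import sequences exp.
Set Implicit Arguments. Unset Strict Implicit. Unset Printing Implicit Defensive.
Import Order.TTheory GRing.Theory Num.Theory.
Local Open Scope ring_scope.

Section OnePeriod.
Variable R : realType.

Definition Z1 (N : nat) (eS eFS eF : R) : R :=
  (1 + expR eF) ^+ N + expR eS * (1 + expR (eF + eFS)) ^+ N.

Definition ndef (N : nat) (x : {ffun 'I_N -> bool}) : nat := \sum_(i < N) x i.

Definition pmf (N : nat) (eS eFS eF : R) (x : {ffun 'I_N -> bool}) : R :=
  (expR (eF * (ndef x)%:R) + expR (eS + (eFS + eF) * (ndef x)%:R)) / Z1 N eS eFS eF.

Definition prob (N : nat) (eS eFS eF : R) (A : pred {ffun 'I_N -> bool}) : R :=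
  \sum_(x | A x) pmf eS eFS eF x.

Definition cprob (N : nat) (eS eFS eF : R) (A B : pred {ffun 'I_N -> bool}) : R :=
  prob eS eFS eF [pred x | A x && B x] / prob eS eFS eF B.

Definition Ptilde (n N : nat) (eS eFS eF : R) : R :=
  ('C(N, n))%:R * (expR (n%:R * eF) + expR (eS + n%:R * eF + n%:R * eFS))
  / Z1 N eS eFS eF.

(* P(D_{t_{k+1}} - D_{t_k} = n | I_{t_k} = m; N_{t_k} = Nt):
   firms are indexed by 'I_Nt; the m in-default firms are those with index < m
   (the paper's labels 1..m). Sum over sets S of n non-defaulted firms (index >= m)
   of P(X_i = 1 for i in S, X_i = 0 for the other non-defaulted i | X_i = 1 for i < m). *)
Definition trans_prob (Nt m n : nat) (eS eFS eF : R) : R :=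
  \sum_(S : {set 'I_Nt} | [forall i, (i \in S) ==> (m <= i)%N] && (#|S| == n))
    cprob eS eFS eF
      [pred x : {ffun 'I_Nt -> bool} | [forall i : 'I_Nt, (m <= i)%N ==> (x i == (i \in S))]]
      [pred x : {ffun 'I_Nt -> bool} | [forall i : 'I_Nt, (i < m)%N ==> x i]].

End OnePeriod.

(* Main.v *)
Require Import Defs.
From HB Require Import structures.
From mathcomp Require Import all_boot all_order all_algebra.
From mathcomp Require Import reals.
From mathcomp Require Import sequences exp.
From mathcomp Require Import zify ring lra.
Import Order.TTheory GRing.Theory Num.Theory.
Local Open Scope ring_scope.

Lemma prod_if (R : realType) (c : R) (m N : nat) :
  \prod_(i < N) (c + (if (i < m)%N then 0 else 1)) = c ^+ (minn m N) * (1 + c) ^+ (N - m).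
Proof.
elim: N => [|N IH]; first by rewrite big_ord0 minn0 sub0n !expr0 mulr1.
rewrite big_ord_recr /= IH; case: (ltnP N m) => h.
  have -> : minn m N.+1 = N.+1 by lia.
  have -> : (N.+1 - m = N - m)%N by lia.
  by rewrite addr0 exprSr; ring.
have -> : minn m N.+1 = m by lia.
have -> : (N.+1 - m = (N - m).+1)%N by lia.
by rewrite exprSr; ring.
Qed.

Lemma sum_lt (m N : nat) : (\sum_(i < N) ((i < m)%N : nat) = minn m N)%N.
Proof.
elim: N => [|N IH]; first by rewrite big_ord0 minn0.
rewrite big_ord_recr /= IH; case: (ltnP N m) => h /=; lia.
Qed.

Lemma sum_ge (m N : nat) : (\sum_(i < N) ((m <= i)%N : nat) = N - m)%N.
Proof.
elim: N => [|N IH]; first by rewrite big_ord0.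
rewrite big_ord_recr /= IH; case: (ltnP N m) => h /=; lia.
Qed.

Lemma card_pred_nat (N : nat) (P : pred 'I_N) : #|P| = (\sum_(i < N) (P i : nat))%N.
Proof.
rewrite -sum1_card big_mkcond /=; apply: eq_bigr => i _; have -> : (i \in P) = P i by []. by case: (P i).
Qed.

Lemma sumB (R : realType) (c : R) (Nt m : nat) : (m <= Nt)%N ->
  \sum_(x : {ffun 'I_Nt -> bool} | [forall i : 'I_Nt, (i < m)%N ==> x i]) c ^+ ndef x
  = c ^+ m * (1 + c) ^+ (Nt - m).
Proof.
move=> hm.
rewrite big_mkcond /=.
transitivity (\sum_(x : {ffun 'I_Nt -> bool})
   \prod_(i < Nt) (fun (i : 'I_Nt) (b : bool) =>
       if b then c else (if (i < m)%N then 0 else 1)) i (x i)).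
  apply: eq_bigr => x _; case: ifP => hB.
    rewrite /ndef expr_sum; apply: eq_bigr => i _ /=.
    have := forallP hB i; case: (x i); case: (i < m)%N => //= _.
  move/negbT: hB => /forallPn [i]; rewrite negb_imply => /andP [him hx].
  by rewrite (bigD1 i) //= (negbTE hx) him mul0r.
rewrite -(bigA_distr_bigA (fun (i : 'I_Nt) (b : bool) =>
       if b then c else (if (i < m)%N then 0 else 1))) /=.
rewrite (eq_bigr (fun i : 'I_Nt => c + (if (i < m)%N then 0 else 1))); last first.
  by move=> i _; rewrite big_bool /= addrC.
rewrite prod_if; have -> : minn m Nt = m by lia.
by [].
Qed.

Lemma pmf_eq (R : realType) (eS eFS eF : R) (N : nat) (x : {ffun 'I_N -> bool}) :
  pmf eS eFS eF x = (expR eF ^+ ndef x + expR eS * (expR eF * expR eFS) ^+ ndef x)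
                    / Z1 N eS eFS eF.
Proof.
by rewrite /pmf expRM_natr expRD [(eFS + eF) * _]mulrC expRM_natl expRD [expR eFS * _]mulrC.
Qed.

Lemma probB (R : realType) (eS eFS eF : R) (Nt m : nat) : (m <= Nt)%N ->
  prob eS eFS eF [pred x : {ffun 'I_Nt -> bool} | [forall i : 'I_Nt, (i < m)%N ==> x i]]
  = (expR eF ^+ m * (1 + expR eF) ^+ (Nt - m)
     + expR eS * ((expR eF * expR eFS) ^+ m * (1 + expR eF * expR eFS) ^+ (Nt - m)))
    / Z1 Nt eS eFS eF.
Proof.
move=> hm; rewrite /prob.
under eq_bigr do rewrite pmf_eq.
by rewrite -big_distrl /= big_split /= -big_distrr /= !sumB.
Qed.

Lemma ndef_S (Nt m : nat) (S : {set 'I_Nt}) :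
  (forall i : 'I_Nt, i \in S -> (m <= i)%N) -> (m <= Nt)%N ->
  ndef [ffun i : 'I_Nt => (i < m)%N || (i \in S)] = (m + #|S|)%N.
Proof.
move=> hS hm; rewrite /ndef.
rewrite (eq_bigr (fun i : 'I_Nt => ((i < m)%N : nat) + ((i \in S) : nat))%N); last first.
  move=> i _; rewrite ffunE; case hi: (i \in S).
    by have := hS i hi; case: ltnP.
  by rewrite orbF addn0.
rewrite big_split /= sum_lt; have -> : minn m Nt = m by lia.
congr (_ + _)%N; rewrite -sum1_card [RHS]big_mkcond /=.
by apply: eq_bigr => i _; case: (i \in S).
Qed.

Lemma Z1_gt0 (R : realType) (N : nat) (eS eFS eF : R) : 0 < Z1 N eS eFS eF.
Proof.
rewrite /Z1; apply: addr_gt0.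
  by apply: exprn_gt0; apply: addr_gt0; [exact: ltr01 | exact: expR_gt0].
apply: mulr_gt0; first exact: expR_gt0.
by apply: exprn_gt0; apply: addr_gt0; [exact: ltr01 | exact: expR_gt0].
Qed.

Theorem proposition3 (R : realType) (eS eFS eF : R) (Nt m n : nat) :
  (n + m <= Nt)%N ->
  trans_prob Nt m n eS eFS eF = Ptilde n (Nt - m) (eS + m%:R * eFS) eFS eF.
Proof.
move=> hnm; have hm : (m <= Nt)%N by lia.
set a := expR eF; set f := expR eFS; set s := expR eS.
set PB := prob eS eFS eF [pred x : {ffun 'I_Nt -> bool} | [forall i : 'I_Nt, (i < m)%N ==> x i]].
set K := ((a ^+ (m + n) + s * (a * f) ^+ (m + n)) / Z1 Nt eS eFS eF) / PB.
rewrite /trans_prob.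
rewrite (eq_bigr (fun _ => K)); last first.
  move=> S /andP [/forallP hS /eqP hcard].
  have hS' : forall i : 'I_Nt, i \in S -> (m <= i)%N by move=> i; apply/implyP/hS.
  rewrite /cprob -/PB /K; congr (_ / _).
  rewrite /prob (big_pred1 [ffun i : 'I_Nt => (i < m)%N || (i \in S)]); last first.
    move=> x /=; apply/andP/eqP.
      move=> [/forallP hA /forallP hB]; apply/ffunP => i; rewrite ffunE.
      case: (ltnP i m) => h /=; first by have := hB i; rewrite h.
      by have := hA i; rewrite h => /eqP.
    move=> ->; split; apply/forallP => i; apply/implyP => h; rewrite ffunE.
      by rewrite ltnNge h /=.
    by rewrite h.
  by rewrite pmf_eq ndef_S // hcard.
rewrite sumr_const.
have -> : #|[pred S : {set 'I_Nt} | [forall i, (i \in S) ==> (m <= i)%N] && (#|S| == n)]|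
        = 'C(Nt - m, n).
  have hU : #|[set i : 'I_Nt | (m <= i)%N]| = (Nt - m)%N.
    by rewrite cardsE (@card_pred_nat Nt [pred i : 'I_Nt | (m <= i)%N]) -(sum_ge m Nt).
  rewrite -hU -cards_draws; apply: eq_card => S; rewrite !inE; congr (_ && _).
  apply/forallP/subsetP.
    by move=> h i hi; rewrite inE; exact: (implyP (h i) hi).
  by move=> h i; apply/implyP => hi; have := h i hi; rewrite inE.
rewrite /K /PB probB // /Ptilde /Z1 -/a -/s -/f.
rewrite !expRD !expRM_natl -/a -/f -/s.
have ha : 0 < a by exact: expR_gt0.
have hf : 0 < f by exact: expR_gt0.
have hs : 0 < s by exact: expR_gt0.
have hZ := Z1_gt0 _ Nt eS eFS eF; rewrite /Z1 expRD -/a -/f -/s in hZ.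
set Z := (1 + a) ^+ Nt + s * (1 + a * f) ^+ Nt in hZ *.
set D := (1 + a) ^+ (Nt - m) + s * f ^+ m * (1 + a * f) ^+ (Nt - m).
have hD : 0 < D.
  rewrite /D; apply: addr_gt0; first by apply: exprn_gt0; apply: addr_gt0.
  by apply: mulr_gt0; [apply: mulr_gt0; [|apply: exprn_gt0] | apply: exprn_gt0;
     apply: addr_gt0; [|apply: mulr_gt0]].
have -> : a ^+ m * (1 + a) ^+ (Nt - m) + s * ((a * f) ^+ m * (1 + a * f) ^+ (Nt - m))
          = a ^+ m * D by rewrite /D exprMn; ring.
have ham : a ^+ m != 0 by apply: lt0r_neq0; apply: exprn_gt0.
rewrite -[LHS]mulr_natr !exprD !exprMn.
field.
by rewrite (lt0r_neq0 hD) (lt0r_neq0 hZ) ham.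
Qed.
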